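(* For $m>0$ and $n\ge 2$, the sparing number of the $(m,n)$-cone $C_{m,n}$ is $m$.
   Context: An $(m,n)$-cone $C_{m,n}$ is the graph whose vertex set is partitioned into sets $U$ and $S$, where the vertices of $U$ induce a cycle $C_m$, $S$ is an independent set with $|S|=n$, and every vertex of $S$ is adjacent to every vertex of $U$; i.e. $C_{m,n}=C_m+S$ (join). Let $\mathbb{N}_0$ be the set of non-negative integers; for $A,B\subseteq\mathbb{N}_0$, $A+B=\{a+b:a\in A,b\in B\}$. An integer additive set-indexer (IASI) of a graph $G$ is an injective map $f:V(G)\to\mathcal{P}(\mathbb{N}_0)$ such that $f^+:E(G)\to\mathcal{P}(\mathbb{N}_0)$, $f^+(uv)=f(u)+f(v)$, is injective. A weak IASI is an IASI with $|f^+(uv)|=\max(|f(u)|,|f(v)|)$ for every edge $uv$. An edge $e$ is mono-indexed if $|f^+(e)|=1$. The sparing number $\varphi(G)$ is the minimum number of mono-indexed edges over all weak IASIs of $G$. *)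

(* Defs.v *)
From HB Require Import structures.
From mathcomp Require Import all_boot finmap.
Set Implicit Arguments. Unset Strict Implicit. Unset Printing Implicit Defensive.
Local Open Scope fset_scope.

Definition sumset (A B : {fset nat}) : {fset nat} :=
  [fset (a + b)%N | a in A, b in B].

Section Graph.
Variables (T : finType) (e : rel T).

(* The edge set of the (simple, undirected) graph given by the symmetric
   irreflexive relation e: unordered pairs {x, y} with e x y. *)
Definition edges : {set {set T}} := [set [set x; y] | x in T, y in T & e x y].

(* Integer additive set-indexer: f injective and the induced edge labelling
   f^+(xy) = f x + f y is injective on (unordered) edges. *)
Definition is_IASI (f : T -> {fset nat}) : Prop :=
  injective f /\
  forall x y x' y', e x y -> e x' y' ->
    sumset (f x) (f y) = sumset (f x') (f y') -> [set x; y] = [set x'; y'].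

Definition is_weak_IASI (f : T -> {fset nat}) : Prop :=
  is_IASI f /\
  forall x y, e x y -> #|` sumset (f x) (f y)| = maxn #|` f x| #|` f y|.

Definition mono_edges (f : T -> {fset nat}) : {set {set T}} :=
  [set E in edges | [exists x, exists y,
     [&& e x y, E == [set x; y] & #|` sumset (f x) (f y)| == 1%N]]].

Definition is_sparing_number (k : nat) : Prop :=
  (exists f, is_weak_IASI f /\ #|mono_edges f| = k) /\
  (forall f, is_weak_IASI f -> k <= #|mono_edges f|).

End Graph.

Definition cycle_adj (m : nat) : rel 'I_m :=
  fun i j => (val j == (val i).+1 %% m) || (val i == (val j).+1 %% m).

(* The (m,n)-cone C_m + S, |S| = n: vertices inl i (cycle U) and inr s (S). *)
Definition cone_adj (m n : nat) : rel ('I_m + 'I_n)%type :=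
  fun x y => match x, y with
  | inl i, inl j => cycle_adj i j
  | inl _, inr _ => true
  | inr _, inl _ => true
  | inr _, inr _ => false
  end.

Arguments cycle_adj m : clear implicits.
Arguments cone_adj m n : clear implicits.

(* Main.v *)
Require Import Defs.
From mathcomp Require Import all_boot finmap.
From mathcomp Require Import zify.
Set Implicit Arguments. Unset Strict Implicit. Unset Printing Implicit Defensive.
Local Open Scope fset_scope.
Local Open Scope nat_scope.

Lemma sumsetP A B k : reflect (exists2 a, a \in A & exists2 b, b \in B & k = (a + b)%N) (k \in sumset A B).
Proof. rewrite /sumset. apply: (iffP (imfset2P _ _ _ _ _)) => [[a Ha [b Hb ->]]|[a Ha [b Hb ->]]]; exists a => //; exists b => //. Qed.

Lemma sumsetC A B : sumset A B = sumset B A.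
Proof.
apply/fsetP => k; apply/sumsetP/sumsetP => [[a Ha [b Hb ->]]|[a Ha [b Hb ->]]];
 exists b => //; exists a => //; apply: addnC.
Qed.

Lemma sumset0 B : sumset fset0 B = fset0.
Proof. apply/fsetP => k; rewrite inE; apply/sumsetP => [[a]]; by rewrite inE. Qed.

Lemma card_trans (A : {fset nat}) c : #|` [fset (a + c)%N | a in A]| = #|` A|.
Proof. rewrite card_imfset /=; last by move=> x y /addIn. done. Qed.

Lemma seq_max (s : seq nat) : s != [::] -> exists2 a, a \in s & forall x, x \in s -> x <= a.
Proof.
elim: s => [//|y s IH] _.
case: s IH => [|z s] IH.
  by exists y; rewrite ?inE // => x; rewrite inE => /eqP ->.
have [a Ha Hm] := IH isT.
case: (leqP y a) => H.
  exists a; first by rewrite inE Ha orbT.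
  by move=> x; rewrite inE => /orP [/eqP ->|/Hm].
exists y; first by rewrite inE eqxx.
move=> x; rewrite inE => /orP [/eqP ->//|/Hm]. move=> Hx; exact: leq_trans Hx (ltnW H).
Qed.

Lemma fset_max (A : {fset nat}) : A != fset0 -> exists2 a, a \in A & forall x, x \in A -> x <= a.
Proof.
move=> HA; apply: seq_max.
have /fset0Pn [x Hx] := HA.
by apply/eqP => E; move: Hx; rewrite -[x \in A]/(x \in (A : seq nat)) E.
Qed.

Lemma sumset_gt_lt (A B : {fset nat}) b0 b1 : b0 \in B -> b1 \in B -> b0 < b1 -> A != fset0 ->
  #|`A| < #|` sumset A B|.
Proof.
move=> H0 H1 Hlt HA.
have [a Ha Hmax] := fset_max HA.
set T := [fset (x + b0)%N | x in A].
have HT : T `<=` sumset A B.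
  apply/fsubsetP => k /imfsetP [x Hx ->]; apply/sumsetP; exists x => //; by exists b0.
have Hn : (a + b1)%N \notin T.
  apply/negP => /imfsetP [x Hx /eqP]; have := Hmax x Hx. lia.
have HT2 : (a + b1)%N |` T `<=` sumset A B.
  rewrite fsubUset HT andbT fsub1set; apply/sumsetP; exists a => //; by exists b1.
have := fsubset_leq_card HT2. by rewrite cardfsU1 Hn card_trans.
Qed.

Lemma two_elems (B : {fset nat}) : 2 <= #|` B| -> exists b0 b1, [/\ b0 \in B, b1 \in B & b0 < b1].
Proof.
move=> HB.
have [x Hx] : exists x, x \in B.
  by apply/fset0Pn; rewrite -cardfs_gt0; apply: leq_trans HB.
have : B `\ x != fset0.
  rewrite -cardfs_gt0; have := cardfsD1 x B; rewrite Hx add1n => E; rewrite E in HB; lia.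
case/fset0Pn => y; rewrite inE => /andP [Hyx Hy].
case: (ltngtP x y) => H.
- by exists x, y.
- by exists y, x.
- by move: Hyx; rewrite H in_fset1 eqxx.

Qed.

Lemma sumset_big (A B : {fset nat}) : 2 <= #|`A| -> 2 <= #|`B| -> maxn #|`A| #|`B| < #|` sumset A B|.
Proof.
move=> HA HB.
have nA : A != fset0 by rewrite -cardfs_gt0; apply: leq_trans HA.
have nB : B != fset0 by rewrite -cardfs_gt0; apply: leq_trans HB.
have [b0 [b1 [? ? ?]]] := two_elems HB.
have [a0 [a1 [? ? ?]]] := two_elems HA.
rewrite gtn_max; apply/andP; split; first exact: (sumset_gt_lt (b0:=b0) (b1:=b1)).
rewrite sumsetC; exact: (sumset_gt_lt (b0:=a0) (b1:=a1)).
Qed.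

Lemma weak_nonempty (T : finType) (e : rel T) f :
  is_weak_IASI e f -> (forall x, ~~ e x x) -> (forall x, exists y, e x y) ->
  forall x, 0 < #|` f x|.
Proof.
move=> [[finj _] Hw] Hirr Hnb x.
rewrite lt0n; apply/negP => /eqP H0.
have [y Hxy] := Hnb x.
have := Hw x y Hxy.
have Ex : f x = fset0 by apply: cardfs0_eq.
rewrite Ex sumset0 !cardfs0 max0n => /esym H1.
have Ey : f y = fset0 by apply: cardfs0_eq.
have Exy : x = y by apply: finj; rewrite Ex Ey.
by move: Hxy; rewrite Exy (negbTE (Hirr y)).
Qed.

Lemma weak_one (T : finType) (e : rel T) f :
  is_weak_IASI e f -> (forall x, 0 < #|` f x|) ->
  forall x y, e x y -> #|` f x| = 1 \/ #|` f y| = 1.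
Proof.
move=> [_ Hw] Hne x y Hxy.
case: (leqP 2 #|` f x|) => Hx; last by left; have := Hne x; lia.
case: (leqP 2 #|` f y|) => Hy; last by right; have := Hne y; lia.
have := sumset_big Hx Hy. rewrite Hw //. lia.
Qed.

Lemma edge_in (T : finType) (e : rel T) x y : e x y -> [set x; y] \in edges e.
Proof. move=> H; apply/imset2P; exists x y => //; by rewrite inE. Qed.

Lemma mono_in (T : finType) (e : rel T) f x y :
  is_weak_IASI e f -> e x y -> #|` f x| = 1 -> #|` f y| = 1 -> [set x; y] \in mono_edges e f.
Proof.
move=> [_ Hw] Hxy Hx Hy.
rewrite inE edge_in //=; apply/existsP; exists x; apply/existsP; exists y.
by rewrite Hxy eqxx Hw // Hx Hy.
Qed.

Lemma set2_eq (T : finType) (a b c d : T) : [set a; b] = [set c; d] ->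
  (a = c /\ b = d) \/ (a = d /\ b = c).
Proof.
move=> E.
have Ha : a \in [set c; d] by rewrite -E !inE eqxx.
have Hb : b \in [set c; d] by rewrite -E !inE eqxx orbT.
have Hc : c \in [set a; b] by rewrite E !inE eqxx.
have Hd : d \in [set a; b] by rewrite E !inE eqxx orbT.
move: Ha Hb Hc Hd; rewrite !inE.
move=> /orP [/eqP ->|/eqP ->] /orP [/eqP ->|/eqP ->] /orP [/eqP Hc|/eqP Hc] /orP [/eqP Hd|/eqP Hd]; subst; auto.
Qed.

Definition succ (m : nat) (Hm : 0 < m) (i : 'I_m) : 'I_m := Ordinal (ltn_pmod i.+1 Hm).

Lemma succ_val m (Hm : 0 < m) (i : 'I_m) : val (succ Hm i) = if i.+1 == m then 0 else i.+1.
Proof.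
rewrite /=; have := ltn_ord i; case: eqP => [->|H] Hi; first by rewrite modnn.
by rewrite modn_small //; lia.
Qed.

Lemma succ_inj m (Hm : 0 < m) : injective (succ Hm).
Proof.
move=> i j /(congr1 val); rewrite !succ_val => E; apply: val_inj => /=.
move: E; have := ltn_ord i; have := ltn_ord j.
case: eqP; case: eqP => /=; lia.
Qed.

Lemma cycle_succ m (Hm : 0 < m) (i : 'I_m) : cycle_adj m i (succ Hm i).
Proof. by rewrite /cycle_adj eqxx. Qed.

Lemma cycle_adjE m (Hm : 0 < m) (i j : 'I_m) : cycle_adj m i j -> j = succ Hm i \/ i = succ Hm j.
Proof.
by rewrite /cycle_adj => /orP [/eqP H|/eqP H]; [left|right]; apply: val_inj.
Qed.

Lemma cycle_irr m (i : 'I_m) : 3 <= m -> ~~ cycle_adj m i i.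
Proof.
move=> H3; have Hm : 0 < m by lia.
rewrite /cycle_adj orbb.
have := succ_val Hm i; rewrite /= => ->.
have := ltn_ord i; case: (i.+1 =P m) => E /= Hi; apply/negP => /eqP; lia.
Qed.

Lemma succ_neq m (i : 'I_m) (Hm : 0 < m) : 3 <= m -> i != succ Hm i.
Proof.
move=> H3; apply/eqP => /(congr1 val); rewrite succ_val.
have := ltn_ord i; case: (i.+1 =P m); move=> E Hi; move: E; case: (i.+1 =P m) => /=; lia.
Qed.

Lemma cone_irr m n (x : 'I_m + 'I_n) : 3 <= m -> ~~ cone_adj m n x x.
Proof. case: x => [i|s] H3 //=; exact: cycle_irr. Qed.

Lemma cone_nb m n (x : 'I_m + 'I_n) : 3 <= m -> 2 <= n -> exists y, cone_adj m n x y.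
Proof.
move=> H3 H2; case: x => [i|s].
- by exists (inr (Ordinal (ltn_trans (isT : 0 < 1) H2))).
- by exists (inl (Ordinal (ltn_trans (isT : 0 < 2) H3))).
Qed.

Lemma inl_inj' (A B : Type) (a b : A) : @inl A B a = inl b -> a = b.
Proof. by case. Qed.
Lemma inr_inj' (A B : Type) (a b : B) : @inr A B a = inr b -> a = b.
Proof. by case. Qed.

Lemma lower_bound m n f : 3 <= m -> 2 <= n -> is_weak_IASI (cone_adj m n) f ->
  m <= #|mono_edges (cone_adj m n) f|.
Proof.
move=> H3 H2 Hw.
have Hm : 0 < m by lia.
have Hne := weak_nonempty Hw (fun x => cone_irr x H3) (fun x => cone_nb x H3 H2).
have H1 := weak_one Hw Hne.
pose s0 : 'I_n := Ordinal (ltn_trans (isT : 0 < 1) H2).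
pose s1 : 'I_n := Ordinal H2.
have s01 : s0 != s1 by [].
pose big x := 1 < #|` f x|.
have nbig x : ~~ big x -> #|` f x| = 1 by rewrite /big; have := Hne x; lia.
case: (boolP [exists i, big (inl i)]) => [/existsP [u Hu]|Hno].
- have Sone s : #|` f (inr s)| = 1.
    case: (H1 (inl u) (inr s) isT) => // E; by move: Hu; rewrite /big E.
  pose g (i : 'I_m) := if big (inl i) then [set inl (succ Hm i); inr s1] else [set inl i; inr s0] : {set 'I_m + 'I_n}.
  have ginj : injective g.
    move=> i j; rewrite /g.
    case: (boolP (big (inl i))) => Hi; case: (boolP (big (inl j))) => Hj /set2_eq [[A B]|[A B]];
      try (by have /succ_inj := inl_inj' A); try (by have := inl_inj' A);
      try (by have E := inr_inj' B; rewrite E eqxx in s01);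
      try (by have E := inr_inj' B; rewrite E eqxx in s01);
      try (by case: A); try (by case: B).
  have Hc : #|g @: [set: 'I_m]| = m.
    by rewrite (card_imset _ ginj) cardsT card_ord.
  apply: (leq_trans (eq_leq (esym Hc))).
  apply: subset_leq_card; apply/subsetP => E /imsetP [i _ ->].
  rewrite /g; case: (boolP (big (inl i))) => Hi.
  + apply: mono_in => //.
    apply: nbig; apply/negP => Hs.
    case: (H1 (inl i) (inl (succ Hm i)) (cycle_succ Hm i)) => E'; [move: Hi|move: Hs]; by rewrite /big E'.
  + by apply: mono_in => //; exact: nbig.
- have Uone i : #|` f (inl i)| = 1.
    apply: nbig; apply/negP => Hi; move/negP: Hno; apply; apply/existsP; by exists i.
  pose g (i : 'I_m) := [set inl i; inl (succ Hm i)] : {set 'I_m + 'I_n}.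
  have ginj : injective g.
    move=> i j /set2_eq [[[A] [B]]|[[A] [B]]]; first by [].
    move: A B => /(congr1 val) A /(congr1 val) B.
    move: A B; rewrite !succ_val; have := ltn_ord i; have := ltn_ord j.
    case: eqP; case: eqP => /=; lia.
  have Hc : #|g @: [set: 'I_m]| = m.
    by rewrite (card_imset _ ginj) cardsT card_ord.
  apply: (leq_trans (eq_leq (esym Hc))).
  apply: subset_leq_card; apply/subsetP => E /imsetP [i _ ->].
  apply: mono_in => //; exact: cycle_succ.
Qed.

Definition NN (m : nat) := 2 ^ m.+2.
Definition fw (m n : nat) (x : 'I_m + 'I_n) : {fset nat} :=
  match x with
  | inl i => [fset (2 * 2 ^ i)%N]
  | inr s => [fset (s.+1 * NN m + 2 * 0)%N; (s.+1 * NN m + (2 * 0 + 1))%N]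
  end.

Lemma pw_lt m (i : 'I_m) : 2 * 2 ^ i + 1 < NN m.
Proof.
rewrite /NN !expnS.
have := leq_pexp2l (isT : 0 < 2) (ltnW (ltn_ord i)).
have : 0 < 2 ^ m by rewrite expn_gt0.
lia.
Qed.

Lemma divmod_eq N q q' p p' : p < N -> p' < N -> q * N + p = q' * N + p' -> q = q' /\ p = p'.
Proof.
move=> Hp Hp' E.
have := congr1 (modn^~ N) E; rewrite /= !modnMDl !modn_small // => Ep.
subst p'; split => //.
move/addIn: E => /eqP; rewrite eqn_pmul2r; [by move/eqP|lia].
Qed.

Lemma sidon_ord a b c d : a <= b -> c <= d -> 2 ^ a + 2 ^ b = 2 ^ c + 2 ^ d -> a = c /\ b = d.
Proof.
move=> Hab Hcd E.
have Pa := leq_pexp2l (isT : 0 < 2) Hab.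
have Pc := leq_pexp2l (isT : 0 < 2) Hcd.
have Ga : 0 < 2 ^ a by rewrite expn_gt0.
have Gc : 0 < 2 ^ c by rewrite expn_gt0.
have Hbd : b = d.
  case: (ltngtP b d) => // H.
  - have := leq_pexp2l (isT : 0 < 2) H; rewrite expnS; lia.
  - have := leq_pexp2l (isT : 0 < 2) H; rewrite expnS; lia.
subst d; split => //; apply: (expnI (isT : 1 < 2)); lia.
Qed.

Lemma sidon a b c d : 2 ^ a + 2 ^ b = 2 ^ c + 2 ^ d -> (a = c /\ b = d) \/ (a = d /\ b = c).
Proof.
case: (leqP a b) => Hab; case: (leqP c d) => Hcd E.
- by left; apply: sidon_ord.
- right; have E' : 2 ^ a + 2 ^ b = 2 ^ d + 2 ^ c by lia.
  by have [] := sidon_ord Hab (ltnW Hcd) E'.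
- right; have E' : 2 ^ b + 2 ^ a = 2 ^ c + 2 ^ d by lia.
  by have [] := sidon_ord (ltnW Hab) Hcd E'.
- left; have E' : 2 ^ b + 2 ^ a = 2 ^ d + 2 ^ c by lia.
  by have [] := sidon_ord (ltnW Hab) (ltnW Hcd) E'.
Qed.

Lemma sumset11 a b : sumset [fset a] [fset b] = [fset (a + b)%N].
Proof.
apply/fsetP => k; apply/sumsetP/fset1P => [[x /fset1P -> [y /fset1P -> ->]]|->] //.
by exists a; rewrite ?inE //; exists b; rewrite ?inE.
Qed.

Lemma sumset12 a b c : sumset [fset a] [fset b; c] = [fset (a + b)%N; (a + c)%N].
Proof.
apply/fsetP => k; rewrite !inE; apply/sumsetP/orP.
- move=> [x /fset1P -> [y]]; rewrite !inE => /orP [/eqP ->|/eqP ->] ->; by [left|right].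
- move=> [/eqP ->|/eqP ->]; exists a; rewrite ?inE //; by [exists b; rewrite ?inE ?eqxx | exists c; rewrite ?inE ?eqxx ?orbT].
Qed.

Lemma mixed_inj N q q' a a' : 2 * a + 1 < N -> 2 * a' + 1 < N ->
  [fset q * N + 2 * a; q * N + (2 * a + 1)] = [fset q' * N + 2 * a'; q' * N + (2 * a' + 1)] ->
  q = q' /\ a = a'.
Proof.
move=> H1 H2 E.
have : q * N + 2 * a \in [fset q' * N + 2 * a'; q' * N + (2 * a' + 1)] by rewrite -E !inE eqxx.
rewrite !inE => /orP [/eqP H|/eqP H].
- have L1 : 2 * a < N by lia.
  have L2 : 2 * a' < N by lia.
  have [Hq Ha] := divmod_eq L1 L2 H; lia.
- have L1 : 2 * a < N by lia.
  have L2 : 2 * a' + 1 < N by lia.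
  have [Hq Ha] := divmod_eq L1 L2 H; lia.
Qed.

Lemma card_mixed N q a : #|` [fset q * N + 2 * a; q * N + (2 * a + 1)]| = 2.
Proof. rewrite cardfs2 (_ : (_ != _) = true) //; apply/eqP; lia. Qed.

Lemma card_fw_l m n (i : 'I_m) : #|` fw (inl i : 'I_m + 'I_n)| = 1.
Proof. exact: cardfs1. Qed.

Lemma card_fw_r m n (s : 'I_n) : #|` fw (inr s : 'I_m + 'I_n)| = 2.
Proof. exact: card_mixed. Qed.

Lemma sum_ll m n (i j : 'I_m) : sumset (fw (inl i : 'I_m + 'I_n)) (fw (inl j : 'I_m + 'I_n)) = [fset 2 * 2 ^ i + 2 * 2 ^ j].
Proof. exact: sumset11. Qed.

Lemma sum_lr m n (i : 'I_m) (s : 'I_n) : sumset (fw (inl i : 'I_m + 'I_n)) (fw (inr s : 'I_m + 'I_n)) =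
  [fset s.+1 * NN m + 2 * 2 ^ i; s.+1 * NN m + (2 * 2 ^ i + 1)].
Proof.
rewrite /= sumset12.
have -> : 2 * 2 ^ i + (s.+1 * NN m + 2 * 0) = s.+1 * NN m + 2 * 2 ^ i by lia.
have -> : 2 * 2 ^ i + (s.+1 * NN m + (2 * 0 + 1)) = s.+1 * NN m + (2 * 2 ^ i + 1) by lia.
done.
Qed.

Lemma sum_rl m n (i : 'I_m) (s : 'I_n) : sumset (fw (inr s : 'I_m + 'I_n)) (fw (inl i : 'I_m + 'I_n)) =
  [fset s.+1 * NN m + 2 * 2 ^ i; s.+1 * NN m + (2 * 2 ^ i + 1)].
Proof. by rewrite sumsetC sum_lr. Qed.

Lemma NN_gt m : 2 * 0 + 1 < NN m.
Proof. rewrite /NN !expnS; have : 0 < 2 ^ m by rewrite expn_gt0. lia. Qed.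

Lemma key_lr m n (i i' : 'I_m) (s s' : 'I_n) :
  [fset s.+1 * NN m + 2 * 2 ^ i; s.+1 * NN m + (2 * 2 ^ i + 1)] =
  [fset s'.+1 * NN m + 2 * 2 ^ i'; s'.+1 * NN m + (2 * 2 ^ i' + 1)] -> i = i' /\ s = s'.
Proof.
move=> E; have [Hq Ha] := mixed_inj (pw_lt i) (pw_lt i') E.
split; apply: val_inj => /=; last by case: Hq.
exact: (expnI (isT : 1 < 2) Ha).
Qed.

Lemma key_ll m (i j i' j' : 'I_m) :
  [fset 2 * 2 ^ i + 2 * 2 ^ j] = [fset 2 * 2 ^ i' + 2 * 2 ^ j'] -> (i = i' /\ j = j') \/ (i = j' /\ j = i').
Proof.
move=> E.
have /fset1P H : 2 * 2 ^ i + 2 * 2 ^ j \in [fset 2 * 2 ^ i' + 2 * 2 ^ j'] by rewrite -E inE.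
have H' : 2 ^ i + 2 ^ j = 2 ^ i' + 2 ^ j' by lia.
case: (sidon H') => [[A B]|[A B]]; [left|right]; split; apply: val_inj; done.
Qed.

Lemma ne_lm x N q a : [fset x] = [fset q * N + 2 * a; q * N + (2 * a + 1)] -> False.
Proof. move/(congr1 (fun A => #|` A|)); by rewrite cardfs1 card_mixed. Qed.

Lemma fw_weak m n : 3 <= m -> is_weak_IASI (cone_adj m n) (@fw m n).
Proof.
move=> H3; split; [split|].
- move=> [i|s] [j|t] E.
  + have /fset1P H : 2 * 2 ^ i \in fw (inl j : 'I_m + 'I_n) by rewrite -E inE.
    congr inl; apply: val_inj => /=; apply: (expnI (isT : 1 < 2)); lia.
  + by have := congr1 (fun A => #|` A|) E; rewrite card_fw_l card_fw_r.
  + by have := congr1 (fun A => #|` A|) E; rewrite card_fw_l card_fw_r.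
  + have [Hq _] := mixed_inj (NN_gt m) (NN_gt m) E.
    by congr inr; apply: val_inj; case: Hq.
- move=> [i|s] [j|t] [i'|s'] [j'|t'] H H' E; rewrite ?sum_ll ?sum_lr ?sum_rl in E;
    try (by case: H); try (by case: H');
    try (by case: (ne_lm E)); try (by case: (ne_lm (esym E))).
  + by case: (key_ll E) => [[-> ->]|[-> ->]] //; rewrite setUC.
  + by case: (key_lr E) => -> ->.
  + by case: (key_lr E) => -> ->; rewrite setUC.
  + by case: (key_lr E) => -> ->; rewrite setUC.
  + by case: (key_lr E) => -> ->.
- move=> [i|s] [j|t] H.
  + by rewrite sum_ll !card_fw_l cardfs1.
  + by rewrite sum_lr card_fw_l card_fw_r card_mixed.
  + by rewrite sum_rl card_fw_l card_fw_r card_mixed.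
  + by case: H.
Qed.

Lemma upper m n : 3 <= m -> #|mono_edges (cone_adj m n) (@fw m n)| <= m.
Proof.
move=> H3; have Hm : 0 < m by lia.
pose g (i : 'I_m) := [set inl i; inl (succ Hm i)] : {set 'I_m + 'I_n}.
apply: (@leq_trans #|g @: [set: 'I_m]|); last first.
  by apply: (leq_trans (leq_imset_card _ _)); rewrite cardsT card_ord.
apply: subset_leq_card; apply/subsetP => E.
rewrite inE => /andP [_ /existsP [x /existsP [y /and3P [Hxy /eqP -> Hc]]]].
case: x y Hxy Hc => [i|s] [j|t] Hxy Hc.
- case: (cycle_adjE Hm Hxy) => ->; apply/imsetP.
  + by exists i.
  + by exists j; rewrite // setUC.
- by move: Hc; rewrite sum_lr card_mixed.
- by move: Hc; rewrite sum_rl card_mixed.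
- by case: Hxy.
Qed.

Theorem theorem2p27 (m n : nat) :
  3 <= m -> 2 <= n -> is_sparing_number (cone_adj m n) m.
Proof.
move=> H3 H2; split; last by move=> f Hf; exact: lower_bound.
exists (@fw m n); split; first exact: fw_weak.
apply/eqP; rewrite eqn_leq upper //=.
exact: lower_bound (fw_weak n H3).
Qed.
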